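(* In the setting of a softmax single-layer network with parameters $\theta_1,\dots,\theta_C\in\mathbb{R}^M$, ERM probabilities $p_i=e^{\theta_i^\top x}/\sum_je^{\theta_j^\top x}$ at the test input $x\in\mathbb{R}^M$, and $g$ defined from the training data matrix $X_N$ by $g=x_\perp/\|x_\perp\|^2$ if $x_\perp=(I-X_N^+X_N)x\neq0$ and $g=X_N^+X_N^{+\top}x/(1+x^\top X_N^+X_N^{+\top}x)$ otherwise: for each label $i$ let $\theta^{(i)}$ be obtained from $\theta$ by replacing $\theta_i$ with $\theta_i+g\big(\ln\sum_je^{\theta_j^\top x}-\theta_i^\top x\big)$. Then the pNML regret $\Gamma=\log\sum_{i=1}^C p_{\theta^{(i)}}(i\mid x)$ equals $$\Gamma=\log\sum_{i=1}^C\frac{p_i}{p_i+p_i^{\,x^\top g}(1-p_i)},$$ and the pNML assignment is $q_{\mathrm{pNML}}(i\mid x)=\dfrac{p_{\theta^{(i)}}(i\mid x)}{\sum_{k=1}^Cp_{\theta^{(k)}}(k\mid x)}$.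
   Context: $p_\theta(i\mid x)=e^{\theta_i^\top x}/\sum_{j=1}^Ce^{\theta_j^\top x}$; $X_N^+$ is the Moore–Penrose pseudo-inverse of the training data matrix $X_N\in\mathbb{R}^{N\times M}$. *)

(* Defs.v *)
From HB Require Import structures.
From mathcomp Require Import all_boot all_order all_algebra.
From mathcomp Require Import all_classical all_reals all_analysis.
Set Implicit Arguments. Unset Strict Implicit. Unset Printing Implicit Defensive.
Import Order.TTheory GRing.Theory Num.Theory.
Local Open Scope ring_scope.

Section PNML.
Variable R : realType.

Definition dotv (M : nat) (u v : 'cV[R]_M) : R := (u^T *m v) 0 0.

Definition is_MP_pinv (N M : nat) (A : 'M[R]_(N, M)) (B : 'M[R]_(M, N)) : Prop :=
  [/\ A *m B *m A = A, B *m A *m B = B,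
      (A *m B)^T = A *m B & (B *m A)^T = B *m A].

Definition softmax (M C : nat) (theta : 'I_C -> 'cV[R]_M) (x : 'cV[R]_M) (i : 'I_C) : R :=
  expR (dotv (theta i) x) / \sum_(j < C) expR (dotv (theta j) x).

Definition pnml_g (N M : nat) (X : 'M[R]_(N, M)) (Xp : 'M[R]_(M, N)) (x : 'cV[R]_M)
  : 'cV[R]_M :=
  let xperp := (1%:M - Xp *m X) *m x in
  if xperp != 0 then (dotv xperp xperp)^-1 *: xperp
  else let A := Xp *m Xp^T in (1 + dotv x (A *m x))^-1 *: (A *m x).

Definition theta_upd (M C : nat) (theta : 'I_C -> 'cV[R]_M) (g x : 'cV[R]_M) (i : 'I_C)
  : 'I_C -> 'cV[R]_M :=
  fun j => if j == i then
             theta i + (ln (\sum_(k < C) expR (dotv (theta k) x)) - dotv (theta i) x) *: g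
           else theta j.

Definition pnml_regret (M C : nat) (theta : 'I_C -> 'cV[R]_M) (g x : 'cV[R]_M) : R :=
  ln (\sum_(i < C) softmax (theta_upd theta g x i) x i).

Definition q_pnml (M C : nat) (theta : 'I_C -> 'cV[R]_M) (g x : 'cV[R]_M) (i : 'I_C) : R :=
  softmax (theta_upd theta g x i) x i /
  \sum_(k < C) softmax (theta_upd theta g x k) x k.

End PNML.

(* Main.v *)
Require Import Defs.
From HB Require Import structures.
From mathcomp Require Import all_boot all_order all_algebra.
From mathcomp Require Import all_classical all_reals all_analysis.
From mathcomp Require Import ring lra.
Import Order.TTheory GRing.Theory Num.Theory.
Local Open Scope ring_scope.

Lemma dotvC (R : realType) M (u v : 'cV[R]_M) : dotv u v = dotv v u.
Proof.
rewrite /dotv !mxE; apply: eq_bigr => k _; rewrite !mxE mulrC //.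
Qed.

Lemma dotvDl (R : realType) M (u w v : 'cV[R]_M) (c : R) :
  dotv (u + c *: w) v = dotv u v + c * dotv w v.
Proof.
by rewrite /dotv linearD /= linearZ /= mulmxDl -scalemxAl !mxE.
Qed.

Lemma key (R : realType) M C (theta : 'I_C -> 'cV[R]_M) (g x : 'cV[R]_M) (i : 'I_C) :
  softmax (theta_upd theta g x i) x i =
  softmax theta x i / (softmax theta x i +
     softmax theta x i `^ dotv x g * (1 - softmax theta x i)).
Proof.
set S := \sum_(k < C) expR (dotv (theta k) x).
set a := dotv (theta i) x.
set d := dotv x g.
have Spos : 0 < S.
  rewrite /S (bigD1 i) //= ltr_wpDr ?expR_gt0 //.
  by apply: sumr_ge0 => k _; rewrite ltW ?expR_gt0.
set c := ln S - a.
have Hi : dotv (theta_upd theta g x i i) x = a + c * d.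
  by rewrite /theta_upd eqxx dotvDl (@dotvC _ _ g).
have HS : \sum_(k < C) expR (dotv (theta_upd theta g x i k) x)
          = S - expR a + expR (a + c * d).
  have HS0 : S = expR a + \sum_(k < C | k != i) expR (dotv (theta k) x).
    by rewrite /S (bigD1 i).
  rewrite HS0 (bigD1 i) //= Hi.
  rewrite (eq_bigr (fun k => expR (dotv (theta k) x))); last first.
    by move=> k Hk; rewrite /theta_upd (negbTE Hk).
  ring.
rewrite /softmax HS Hi -/S -/a.
have pos : 0 < expR a / S by rewrite divr_gt0 ?expR_gt0.
have -> : (expR a / S) `^ d = (expR (c * d))^-1.
  rewrite /powR gt_eqF // -expRN; congr expR.
  rewrite ln_div ?expRK ?posrE ?expR_gt0 // /c; ring.
rewrite expRD.
have E0 : expR (c * d) != 0 by rewrite gt_eqF ?expR_gt0.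
have A0 : expR a != 0 by rewrite gt_eqF ?expR_gt0.
have S0 : S != 0 by rewrite gt_eqF.
set E := expR (c * d); set A := expR a.
have D0 : S - A + A * E != 0.
  rewrite gt_eqF //.
  have : A <= S.
    rewrite /A /a /S (bigD1 i) //= lerDl.
    by apply: sumr_ge0 => k _; rewrite ltW ?expR_gt0.
  have : 0 < A * E by rewrite mulr_gt0 ?expR_gt0.
  lra.
have D1 : A / S + E^-1 * (1 - A / S) != 0.
  have -> : A / S + E^-1 * (1 - A / S) = (S - A + A * E) / (S * E).
    by field; rewrite S0 E0.
  by rewrite mulf_neq0 // invr_eq0 mulf_neq0.
have D2 : A * E + (S - A) != 0.
  rewrite addrC; exact: D0.
field; rewrite ?D1 ?S0 ?E0 ?D2 //.
Qed.

Theorem mainTheorem12 (R : realType) (N M C : nat)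
  (X : 'M[R]_(N, M)) (Xp : 'M[R]_(M, N))
  (theta : 'I_C -> 'cV[R]_M) (x : 'cV[R]_M) :
  is_MP_pinv X Xp ->
  let g := pnml_g X Xp x in
  let p := softmax theta x in
  pnml_regret theta g x
    = ln (\sum_(i < C) p i / (p i + p i `^ dotv x g * (1 - p i)))
  /\ (forall i : 'I_C,
        q_pnml theta g x i
          = softmax (theta_upd theta g x i) x i /
            \sum_(k < C) softmax (theta_upd theta g x k) x k).
Proof.
move=> _ g p; split => // .
by rewrite /pnml_regret; congr ln; apply: eq_bigr => i _; rewrite key.
Qed.
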